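(* Let $\Gamma$ be an open graph with a fixed linear ordering of its terminal edges and weights $\mathbf A=(A_e)$, and let $S_\Gamma(\mathbf A,\boldsymbol\xi)$ be its generating partition function. Let $i$ and $j$ be terminal edges with $j$ immediately following $i$ in the ordering, with weights $A_i,A_j$, and let $\Gamma'$ be the graph obtained by identifying the terminal vertices of $i$ and $j$ and erasing the resulting two-valent vertex, so that $i,j$ become a single edge $e$ with weight $A_e=A_iA_j$. Let $\mathbf A'$ be the resulting weights and $\boldsymbol\xi'$ be $\boldsymbol\xi$ with $\xi_i,\xi_j$ removed. Then $$S_{\Gamma'}(\mathbf A',\boldsymbol\xi')=\int S_\Gamma(\mathbf A,\boldsymbol\xi)\,e^{\xi_i\xi_j}\,d\xi_j\,d\xi_i .$$
   Context: An open graph is a graph with some terminal edges, each having a univalent terminal vertex; other vertices are internal. A dimer configuration on an open graph is a set of edges containing every internal vertex exactly once (no condition on terminal vertices). For a subset $T$ of the set $\mathcal T_\Gamma$ of terminal edges, $S_\Gamma(\mathbf A,T)=\sum_D\prod_{e\in D}A_e$, summed over dimer configurations $D$ in which exactly the terminal edges of $T$ are occupied. With odd (Grassmann) variables $\xi_t$, $t\in\mathcal T_\Gamma$, the generating partition function is $S_\Gamma(\mathbf A,\boldsymbol\xi)=\sum_{T\subset\mathcal T_\Gamma}S_\Gamma(\mathbf A,T)\prod_{t\in T}\xi_t$, products taken in the fixed order. Berezin integration with $\int\xi_i\xi_j\,d\xi_j\,d\xi_i=1$. *)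

(* Defs.v *)
From HB Require Import structures.
From mathcomp Require Import all_boot all_order all_algebra.
Set Implicit Arguments. Unset Strict Implicit. Unset Printing Implicit Defensive.
Import Order.TTheory GRing.Theory.
Local Open Scope ring_scope.

(*  Open graphs.  Vertices live in a finite type V, edges in a finite  *)
(*  type E.  An open graph selects an edge set, an endpoint map (so    *)
(*  multi-edges and loops are representable), a set of internal and a  *)
(*  set of terminal vertices.                                          *)
Record open_graph (V E : finType) := OpenGraph {
  og_edges : {set E};
  og_ends : E -> V * V;
  og_internal : {set V};
  og_terminal : {set V}
}.

Section Graphs.
Variables (V E : finType).
Implicit Types (G : open_graph V E) (D : {set E}) (v : V) (e : E).

(* number of half-edges of edges of D at v (a loop counts twice) *)
Definition incid G D v : nat :=
  (\sum_(e in D) (((og_ends G e).1 == v) + ((og_ends G e).2 == v)))%N.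

Definition is_endpoint G e v :=
  ((og_ends G e).1 == v) || ((og_ends G e).2 == v).

Definition other G e v :=
  if (og_ends G e).1 == v then (og_ends G e).2 else (og_ends G e).1.

Definition open_graph_wf G :=
  [/\ [disjoint og_internal G & og_terminal G],
      (forall e, e \in og_edges G ->
         ((og_ends G e).1 \in og_internal G :|: og_terminal G) /\
         ((og_ends G e).2 \in og_internal G :|: og_terminal G))
    & (forall v, v \in og_terminal G -> incid G (og_edges G) v = 1%N)].

Definition tedges G : {set E} :=
  [set e in og_edges G | 
     (((og_ends G e).1 \in og_terminal G) || ((og_ends G e).2 \in og_terminal G))].

(* dimer configuration: a set of edges covering every internal vertex
   exactly once (no condition on terminal vertices) *)
Definition dimer G D :=
  (D \subset og_edges G) && [forall v in og_internal G, incid G D v == 1%N].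

Definition Sdim (R : comPzRingType) G (A : E -> R) (T : {set E}) : R :=
  \sum_(D : {set E} | dimer G D && (D :&: tedges G == T)) \prod_(e in D) A e.

(* Gamma' : glue the terminal vertices ti (of i) and tj (of j) and erase
   the resulting two-valent vertex; i and j become the single edge e,
   which keeps the name i, joining the other endpoints of i and j. *)
Definition glue G (i j : E) (ti tj : V) : open_graph V E :=
  OpenGraph (og_edges G :\ j)
    (fun e => if e == i then (other G i ti, other G j tj) else og_ends G e)
    (og_internal G) (og_terminal G :\ ti :\ tj).

Definition glue_weights (R : comPzRingType) (A : E -> R) (i j : E) : E -> R :=
  fun e => if e == i then A i * A j else A e.

End Graphs.

(*  Grassmann algebra over R with odd generators xi_t, t : E, ordered  *)
(*  by their position in a sequence ts.  An element is its coefficient *)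
(*  function on the monomial basis xi_U (U : {set E}), each monomial   *)
(*  taken as the product of its generators in increasing order.        *)
Section Grassmann.
Variables (R : comPzRingType) (E : finType).
Definition grass := {ffun {set E} -> R}.

Definition gbasis (U : {set E}) : grass := [ffun W => (W == U)%:R].
Definition gone : grass := gbasis set0.
Definition gen (t : E) : grass := gbasis [set t].
Definition gadd (f g : grass) : grass := [ffun U => f U + g U].
Definition gscale (c : R) (f : grass) : grass := [ffun U => c * f U].
Definition gzero : grass := [ffun _ => 0].
Definition gsum (I : finType) (P : pred I) (F : I -> grass) : grass :=
  [ffun U => \sum_(x | P x) F x U].

Variable ts : seq E.
Definition rk (t : E) : nat := index t ts.

(* number of transpositions needed to reorder xi_S xi_T *)
Definition ninv (S T : {set E}) : nat :=
  #|[set p : E * E | [&& p.1 \in S, p.2 \in T & (rk p.2 < rk p.1)%N]]|.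

Definition gmul (f g : grass) : grass :=
  [ffun U => \sum_(S : {set E}) \sum_(T : {set E})
     (if [disjoint S & T] && (S :|: T == U)
      then (-1) ^+ ninv S T * f S * g T else 0)].

Definition gprod (T : {set E}) : grass :=
  foldr gmul gone [seq gen t | t <- [seq t <- ts | t \in T]].

(* Berezin integration  f |-> \int f d xi_k , normalised so that
   \int g xi_k d xi_k = g for g free of xi_k (the iterated integral
   \int f d xi_j d xi_i is berezin i (berezin j f), and then
   \int xi_i xi_j d xi_j d xi_i = 1 when i precedes j). *)
Definition berezin (k : E) (f : grass) : grass :=
  [ffun U : {set E} => if k \in U then 0
             else (-1) ^+ #|[set u in U | (rk k < rk u)%N]| * f (k |: U)].
End Grassmann.

Definition genpf (R : comPzRingType) (V E : finType) (G : open_graph V E)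
    (A : E -> R) (ts : seq E) : grass R E :=
  gsum (fun T : {set E} => T \subset tedges G)
       (fun T => gscale (Sdim G A T) (gprod R ts T)).

(* Main.v *)
Require Import Defs.
From mathcomp Require Import all_boot all_order all_algebra zify.
Set Implicit Arguments. Unset Strict Implicit. Unset Printing Implicit Defensive.
Import Order.TTheory GRing.Theory.
Local Open Scope ring_scope.

Lemma sum_delta (R : comPzRingType) (E : finType) (F : {set E} -> R) (a : {set E}) :
  \sum_(T : {set E}) (if T == a then F T else 0) = F a.
Proof.
by rewrite (bigD1 a) //= eqxx big1 ?addr0 // => T /negbTE ->.
Qed.

Lemma gmul_basis_r (R : comPzRingType) (E : finType) (ts : seq E) (f : grass R E)
   (T0 U : {set E}) :
  gmul ts f (gbasis R T0) U =
  \sum_(S : {set E}) (if [disjoint S & T0] && (S :|: T0 == U)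
                      then (-1) ^+ ninv ts S T0 * f S else 0).
Proof.
rewrite ffunE; apply: eq_bigr => S _.
rewrite (bigD1 T0) //= big1 ?addr0; last first.
  by move=> T /negbTE HT; rewrite ffunE HT mulr0; case: ifP.
by rewrite ffunE eqxx mulr1.
Qed.

Lemma gmul_basis (R : comPzRingType) (E : finType) (ts : seq E)
   (S0 T0 U : {set E}) :
  gmul ts (gbasis R S0) (gbasis R T0) U =
  if [disjoint S0 & T0] && (S0 :|: T0 == U) then (-1) ^+ ninv ts S0 T0 else 0.
Proof.
rewrite gmul_basis_r (bigD1 S0) //= big1 ?addr0; last first.
  by move=> S /negbTE HS; rewrite ffunE HS mulr0; case: ifP.
by rewrite ffunE eqxx mulr1.
Qed.

Lemma gmul_addr (R : comPzRingType) (E : finType) (ts : seq E) (f a b : grass R E) U :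
  gmul ts f (gadd a b) U = gmul ts f a U + gmul ts f b U.
Proof.
rewrite !ffunE -big_split /=; apply: eq_bigr => S _.
rewrite -big_split /=; apply: eq_bigr => T _. rewrite ffunE.
by case: ifP => _; rewrite ?mulrDr ?addr0.
Qed.

Lemma gmul_gen_basis (R : comPzRingType) (E : finType) (ts : seq E) t (W : {set E}) :
  t \notin W -> (forall w, w \in W -> (rk ts t < rk ts w)%N) ->
  gmul ts (gen R t) (gbasis R W) = gbasis R (t |: W).
Proof.
move=> tW Hw; apply/ffunP => U; rewrite gmul_basis [RHS]ffunE.
have -> : ninv ts [set t] W = 0%N.
  apply/eqP; rewrite cards_eq0; apply/eqP/setP => -[a b]; rewrite !inE /=.
  case: eqP => [-> | _] //=; case bW: (b \in W) => //=.
  by rewrite ltnNge ltnW // Hw.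
rewrite disjoints1 tW /= eq_sym.
by case: eqP.
Qed.

Lemma gprod_sorted (R : comPzRingType) (E : finType) (ts : seq E) (l : seq E) :
  sorted (relpre (rk ts) ltn) l ->
  foldr (gmul ts) (gone R E) [seq gen R t | t <- l] = gbasis R [set x in l].
Proof.
elim: l => [|t l IH] /=.
  by move=> _; rewrite /gone; congr gbasis; apply/setP => x; rewrite !inE.
move=> Hp.
have Hall := order_path_min (fun y x z => @ltn_trans (rk ts y) (rk ts x) (rk ts z)) Hp.
rewrite IH; last exact: path_sorted Hp.
have -> : [set x in t :: l] = t |: [set x in l].
  by apply/setP => x; rewrite !inE.
apply: gmul_gen_basis.
  rewrite inE; apply/negP => tl.
  by move/allP: Hall => /(_ t tl) /=; rewrite ltnn.
by move=> w; rewrite inE => wl; move/allP: Hall => /(_ w wl).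
Qed.

Lemma map_index_iota (T : eqType) (s : seq T) :
  uniq s -> [seq index t s | t <- s] = iota 0 (size s).
Proof.
elim: s => //= x s IH /andP[xs us]; rewrite eqxx; congr cons.
rewrite -(addn0 1%N) iotaDl -IH // -map_comp; apply/eq_in_map => t ts /=.
have /negbTE -> : x != t by apply/eqP => xt; rewrite xt ts in xs.
by [].
Qed.

Lemma gprod_basis (R : comPzRingType) (E : finType) (ts : seq E) (T : {set E}) :
  uniq ts -> T \subset [set t in ts] -> gprod R ts T = gbasis R T.
Proof.
move=> uts sT; rewrite /gprod gprod_sorted.
  congr gbasis; apply/setP => x; rewrite !inE mem_filter.
  by case xT: (x \in T) => //=; move/subsetP: sT => /(_ x xT); rewrite inE.
apply: sorted_filter.
  by move=> y x z; apply: ltn_trans.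
by rewrite -sorted_map /rk map_index_iota // iota_ltn_sorted.
Qed.

Lemma genpfE (R : comPzRingType) (V E : finType) (G : open_graph V E)
    (A : E -> R) (ts : seq E) U :
  uniq ts -> [set t in ts] = tedges G ->
  genpf G A ts U = if U \subset tedges G then Sdim G A U else 0.
Proof.
move=> uts hts; rewrite /genpf ffunE.
rewrite (eq_bigr (fun T => if T == U then Sdim G A T else 0)); last first.
  move=> T sT; rewrite ffunE gprod_basis //; last by rewrite hts.
  rewrite ffunE.
  by rewrite eq_sym; case: (T =P U) => [->|_]; rewrite ?mulr1 ?mulr0.
rewrite -big_mkcondr /=.
case sU: (U \subset tedges G).
  rewrite (big_pred1 U) // => T /=; rewrite andbC.
  by case: (T =P U) => [->|].
rewrite big1 // => T /andP[sT /eqP eTU].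
by move: sT; rewrite eTU sU.
Qed.

Lemma pos_facts (E : finType) (ts s1 s2 : seq E) (i j : E) :
  uniq ts -> ts = s1 ++ i :: j :: s2 ->
  [/\ i != j, rk ts j = (rk ts i).+1 &
      forall u, u != j -> (rk ts j < rk ts u)%N = (rk ts i < rk ts u)%N].
Proof.
move=> uts hts.
have : uniq (s1 ++ i :: j :: s2) by rewrite -hts.
rewrite cat_uniq /= => /and5P[_ H1 H2 _ _].
move: H1 H2; rewrite in_cons !negb_or => /and3P[is1 js1 _] /andP[ij _].
have rki : rk ts i = size s1 by rewrite /rk hts index_cat (negbTE is1) /= eqxx addn0.
have rkj : rk ts j = (size s1).+1.
  by rewrite /rk hts index_cat (negbTE js1) /= (negbTE ij) eqxx addn1.
have jts : j \in ts by rewrite hts mem_cat !in_cons eqxx !orbT.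
have rkinj : forall u, rk ts u = rk ts j -> u = j.
  move=> u H; case uin: (u \in ts).
    by move: H; rewrite /rk => H; rewrite -(nth_index j uin) H nth_index.
  have := index_mem j ts; rewrite -/(rk ts j) -H /rk memNindex ?uin // ltnn jts.
  by [].
split => //; first by rewrite rkj rki.
move=> u uj; rewrite rkj rki (leq_eqVlt (size s1).+1).
have /negbTE -> // : ((size s1).+1 != rk ts u).
apply/eqP => H; move/eqP: uj; apply; apply: rkinj; by rewrite rkj H.
Qed.

Lemma ninv0r (E : finType) (ts : seq E) (S : {set E}) : ninv ts S set0 = 0%N.
Proof. by apply/eqP; rewrite cards_eq0; apply/eqP/setP => -[a b]; rewrite !inE andbF. Qed.

Lemma berezin_main (R : comPzRingType) (E : finType) (ts s1 s2 : seq E) (i j : E)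
   (g : grass R E) (U : {set E}) :
  uniq ts -> ts = s1 ++ i :: j :: s2 -> i \notin U -> j \notin U ->
  berezin ts i (berezin ts j
    (gmul ts g (gadd (gone R E) (gmul ts (gen R i) (gen R j))))) U
  = g (j |: (i |: U)) + g U.
Proof.
move=> uts hts iU jU.
have [ij rkij key] := pos_facts uts hts.
rewrite ffunE (negbTE iU) ffunE in_setU1 eq_sym (negbTE ij) (negbTE jU) /=.
have -> : [set u in i |: U | (rk ts j < rk ts u)%N] = [set u in U | (rk ts i < rk ts u)%N].
  apply/setP => u; rewrite !inE; case: (u =P i) => [->|/eqP ui] /=.
    by rewrite (negbTE iU) rkij /= ltnNge leqnSn.
  case uU: (u \in U) => //=; apply: key; apply/eqP => uj; by rewrite -uj uU in jU.
rewrite mulrA -exprD addnn -mul2n exprM sqrrN expr1n expr1n mul1r.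
rewrite gmul_addr.
have -> : gmul ts (gen R i) (gen R j) = gbasis R [set i; j].
  rewrite /gen gmul_gen_basis //; first by rewrite inE.
  by move=> w; rewrite inE => /eqP ->; rewrite rkij.
congr (_ + _).
  rewrite /gone gmul_basis_r.
  rewrite (eq_bigr (fun S => if S == j |: (i |: U) then g S else 0)).
    by rewrite sum_delta.
  move=> S _; rewrite ninv0r expr0 mul1r setU0.
  have -> : [disjoint S & set0] by rewrite -setI_eq0 setI0.
  by [].
rewrite gmul_basis_r.
rewrite (eq_bigr (fun S => if S == U then (-1) ^+ ninv ts U [set i; j] * g S else 0)).
  rewrite sum_delta.
  have -> : ninv ts U [set i; j] = (2 * #|[set u in U | (rk ts i < rk ts u)%N]|)%N.
    have -> : 2%N = #|[set i; j]| by rewrite cards2 ij.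
    rewrite /ninv mulnC -cardsX.
    apply: eq_card => -[u v]; rewrite !inE /=.
    case: (v =P i) => [->|vi] /=; first by rewrite andbT andbC.
    case: (v =P j) => [->|vj] /=; last by rewrite !andbF.
    rewrite andbT; case uU: (u \in U) => //=; apply: key.
    by apply/eqP => uj; rewrite -uj uU in jU.
  by rewrite exprM sqrrN expr1n expr1n mul1r.
move=> S _.
have -> : [disjoint S & [set i; j]] && (S :|: [set i; j] == j |: (i |: U)) = (S == U).
  apply/idP/eqP.
    move=> /andP[dis /eqP e]; apply/setP => x.
    move/setP: e => /(_ x); rewrite !inE.
    case: (x =P i) => [->|xi]; first by move=> _; rewrite (negbTE iU); apply/negP => iS; have := disjointFr dis iS; rewrite !inE eqxx.
    case: (x =P j) => [->|xj]; first by move=> _; rewrite (negbTE jU); apply/negP => jS; have := disjointFr dis jS; rewrite !inE eqxx orbT.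
    by rewrite /= orbF.
  move=> ->; apply/andP; split.
    rewrite -setI_eq0; apply/eqP/setP => x; rewrite !inE.
    case: (x =P i) => [->|_]; first by rewrite (negbTE iU).
    case: (x =P j) => [->|_]; first by rewrite (negbTE jU).
    by rewrite andbF.
  apply/eqP/setP => x; rewrite !inE.
  by case: (x \in U); case: (x == i); case: (x == j).
by case: (S =P U) => [->|].
Qed.

Lemma incid_noi (V E : finType) (G : open_graph V E) i j ti tj (D : {set E}) v :
  i \notin D -> incid (glue G i j ti tj) D v = incid G D v.
Proof.
move=> iD; apply: eq_bigr => e eD /=.
by have /negbTE -> : e != i by apply/eqP => ei; rewrite -ei eD in iD.
Qed.

Lemma term_other (V E : finType) (G : open_graph V E) e t v :
  is_endpoint G e t -> t != v ->
  (((og_ends G e).1 == v) + ((og_ends G e).2 == v))%N = (other G e t == v).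
Proof.
rewrite /is_endpoint /other => Ht tv.
case: ((og_ends G e).1 =P t) => [h|h].
  by rewrite h (negbTE tv).
move: Ht; case: ((og_ends G e).1 =P t) => // _ /= /eqP ->.
by rewrite (negbTE tv) addn0.
Qed.

Lemma incid_glue (V E : finType) (G : open_graph V E) i j ti tj (D : {set E}) v :
  i \in D -> j \in D -> i != j -> is_endpoint G i ti -> is_endpoint G j tj ->
  ti != v -> tj != v ->
  incid (glue G i j ti tj) (D :\ j) v = incid G D v.
Proof.
move=> iD jD ij Hi Hj tiv tjv.
rewrite /incid (bigD1 i) /=; last by rewrite !inE ij.
rewrite [in RHS](bigD1 j) //= [in RHS](bigD1 i) /=; last by rewrite iD ij.
rewrite eqxx.
have -> : (\sum_(e in D :\ j | e != i)
    ((((if e == i then (other G i ti, other G j tj) else og_ends G e).1 == v) +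
     ((if e == i then (other G i ti, other G j tj) else og_ends G e).2 == v))))%N
  = (\sum_(e | (e \in D) && (e != j) && (e != i))
    (((og_ends G e).1 == v) + ((og_ends G e).2 == v)))%N.
  apply: eq_big => e; first by rewrite !inE [(e != j) && _]andbC.
  by move=> /andP[_ /negbTE ->].
rewrite /= -(term_other Hi tiv) -(term_other Hj tjv).
lia.
Qed.

Lemma uniq_endpoint (V E : finType) (G : open_graph V E) v e e' :
  open_graph_wf G -> v \in og_terminal G -> e \in og_edges G -> e' \in og_edges G ->
  is_endpoint G e v -> is_endpoint G e' v -> e = e'.
Proof.
case=> _ _ /(_ v) H vt eE e'E He He'; have := H vt; rewrite /incid.
move=> H1; case: (e =P e') => // /eqP ee'; move: H1.
rewrite (bigD1 e) //= (bigD1 e') /=; last by rewrite e'E eq_sym ee'.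
have pos : forall b1 b2 : bool, b1 || b2 -> (0 < b1 + b2)%N by case; case.
have := pos _ _ He; have := pos _ _ He'.
lia.
Qed.

Lemma internal_not_terminal (V E : finType) (G : open_graph V E) v :
  open_graph_wf G -> v \in og_internal G -> v \notin og_terminal G.
Proof. by case=> dis _ _ vI; rewrite (disjointFr dis vI). Qed.

Lemma not_endpoint (V E : finType) (G : open_graph V E) i ti e :
  open_graph_wf G -> ti \in og_terminal G -> is_endpoint G i ti ->
  i \in og_edges G -> e \in og_edges G -> e != i ->
  ((og_ends G e).1 != ti) && ((og_ends G e).2 != ti).
Proof.
move=> wf tiT Hi iE eE ei; rewrite -negb_or; apply/negP => He.
by move/eqP: ei; apply; apply: (uniq_endpoint wf tiT eE iE He Hi).
Qed.

Lemma tedges_glue (V E : finType) (G : open_graph V E) i j ti tj :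
  open_graph_wf G -> ti \in og_terminal G -> is_endpoint G i ti ->
  tj \in og_terminal G -> is_endpoint G j tj ->
  i \in og_edges G -> j \in og_edges G ->
  other G i ti \in og_internal G -> other G j tj \in og_internal G ->
  tedges (glue G i j ti tj) = tedges G :\ i :\ j.
Proof.
move=> wf tiT Hi tjT Hj iE jE oi oj.
apply/setP => e; rewrite /tedges /= !inE.
case: (e =P i) => [->|/eqP ei] /=.
  by rewrite (negbTE (internal_not_terminal wf oi)) (negbTE (internal_not_terminal wf oj)) !andbF.
case: (e =P j) => [->|/eqP ej] //=.
case eE: (e \in og_edges G) => //=.
have /andP[a1 a2] := not_endpoint wf tiT Hi iE eE ei.
have /andP[b1 b2] := not_endpoint wf tjT Hj jE eE ej.
by rewrite a1 a2 b1 b2.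
Qed.

Lemma Sdim_glue (R : comPzRingType) (V E : finType) (G : open_graph V E) (A : E -> R)
   i j ti tj (U : {set E}) :
  open_graph_wf G -> ti \in og_terminal G -> is_endpoint G i ti ->
  tj \in og_terminal G -> is_endpoint G j tj ->
  i \in tedges G -> j \in tedges G -> i != j ->
  other G i ti \in og_internal G -> other G j tj \in og_internal G ->
  i \notin U -> j \notin U ->
  Sdim (glue G i j ti tj) (glue_weights A i j) U =
  Sdim G A U + Sdim G A (j |: (i |: U)).
Proof.
move=> wf tiT Hi tjT Hj iT jT ij oi oj iU jU.
have iE : i \in og_edges G by move: iT; rewrite inE => /andP[].
have jE : j \in og_edges G by move: jT; rewrite inE => /andP[].
have hT := tedges_glue wf tiT Hi tjT Hj iE jE oi oj.
have vti : forall v, v \in og_internal G -> ti != v.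
  by move=> v vI; apply/eqP => e; move: (internal_not_terminal wf vI); rewrite -e tiT.
have vtj : forall v, v \in og_internal G -> tj != v.
  by move=> v vI; apply/eqP => e; move: (internal_not_terminal wf vI); rewrite -e tjT.
rewrite /Sdim (bigID (fun D : {set E} => i \in D)) /= addrC; congr (_ + _).
  apply: eq_big => D; last first.
    move=> /andP[_ iD]; apply: eq_bigr => e eD; rewrite /glue_weights.
    by have /negbTE -> : e != i by apply/eqP => ei; rewrite -ei eD in iD.
  case iD: (i \in D); rewrite /= ?andbF.
    symmetry; apply/negbTE; rewrite negb_and; apply/orP; right.
    by apply/eqP => e; move/setP: e => /(_ i); rewrite in_setI iD iT (negbTE iU).
  rewrite andbT.
  case jD: (j \in D).
    rewrite /dimer /=.
    have -> : (D \subset og_edges G :\ j) = false.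
      by apply/negbTE/negP => /subsetP /(_ j jD); rewrite !inE eqxx.
    symmetry; apply/negbTE; rewrite negb_and; apply/orP; right.
    by apply/eqP => e; move/setP: e => /(_ j); rewrite in_setI jD jT (negbTE jU).
  rewrite hT /dimer /=.
  have -> : (D \subset og_edges G :\ j) = (D \subset og_edges G).
    apply/subsetP/subsetP => H x xD; have := H x xD; rewrite !inE; first by case/andP.
    by move=> ->; rewrite andbT; apply/eqP => xj; rewrite -xj xD in jD.
  have -> : D :&: (tedges G :\ i :\ j) = D :&: tedges G.
    apply/setP => x; rewrite !inE; case xD: (x \in D) => //=.
    have /negbTE -> : x != i by apply/eqP => xi; rewrite -xi xD in iD.
    by have /negbTE -> : x != j by apply/eqP => xj; rewrite -xj xD in jD.
  congr (_ && _); congr (_ && _).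
  apply: eq_forallb => v; congr (_ ==> _).
  by rewrite incid_noi ?iD.
rewrite (reindex_onto (fun D : {set E} => D :\ j) (fun D => j |: D)) /=; last first.
  move=> D /andP[/andP[/andP[sD _] _] _]; apply: setU1K; apply/negP => jD.
  by have := subsetP sD j jD; rewrite !inE eqxx.
apply: eq_big => D; last first.
  move=> /andP[/andP[_ iDj] ejD].
  have jD : j \in D by rewrite -(eqP ejD) setU11.
  have iD : i \in D by move: iDj; rewrite in_setD1 => /andP[].
  rewrite (bigD1 i) //= [RHS](bigD1 j) //= [in RHS](bigD1 i) /=; last by rewrite iD ij.
  rewrite /glue_weights eqxx.
  have -> : \prod_(e in D :\ j | e != i) (if e == i then A i * A j else A e)
     = \prod_(e | (e \in D) && (e != j) && (e != i)) A e.
    apply: eq_big => [e|e /andP[_ /negbTE ->]] //.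
    by rewrite !inE [(e != j) && _]andbC.
  by rewrite mulrA (mulrC (A j)).
have ejD : (j |: (D :\ j) == D) = (j \in D).
  by apply/eqP/idP => [<-|/setD1K //]; rewrite setU11.
rewrite ejD.
case jD: (j \in D); last first.
  rewrite andbF; symmetry; apply/negbTE; rewrite negb_and; apply/orP; right.
  by apply/eqP => e; move/setP: e => /(_ j); rewrite in_setI jD !in_setU1 eqxx.
rewrite andbT in_setD1 ij /=.
case iD: (i \in D); last first.
  rewrite andbF; symmetry; apply/negbTE; rewrite negb_and; apply/orP; right.
  by apply/eqP => e; move/setP: e => /(_ i); rewrite in_setI iD !in_setU1 eqxx orbT.
rewrite andbT hT /dimer /=.
have -> : (D :\ j \subset og_edges G :\ j) = (D \subset og_edges G).
  apply/subsetP/subsetP => H x xD.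
    case: (x =P j) => [->//|/eqP xj].
    by move: (H x); rewrite !inE xj xD /= => /(_ isT).
  by move: xD; rewrite !inE => /andP[xj /H ->]; rewrite xj.
have -> : ((D :\ j) :&: (tedges G :\ i :\ j) == U) = (D :&: tedges G == j |: (i |: U)).
  apply/eqP/eqP => H; apply/setP => x; move/setP: H => /(_ x);
    rewrite !in_setI !in_setD1 !in_setU1.
    case: (x =P j) => [->|_]; first by rewrite jD jT.
    case: (x =P i) => [->|_]; first by rewrite iD iT.
    by move=> /= ->.
  case: (x =P j) => [->|_]; first by rewrite /= ?andbF (negbTE jU).
  case: (x =P i) => [->|_]; first by rewrite /= ?andbF (negbTE iU).
  by move=> /= ->.
congr (_ && _); congr (_ && _).
apply: eq_forallb => v; case vI: (v \in og_internal G) => //=.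
by rewrite incid_glue // ?vti ?vtj.
Qed.

Theorem lemma1 (R : comPzRingType) (V E : finType) (G : open_graph V E)
    (A : E -> R) (ts s1 s2 : seq E) (i j : E) (ti tj : V) :
  open_graph_wf G ->
  uniq ts ->
  [set t in ts] = tedges G ->
  ts = s1 ++ i :: j :: s2 ->
  ti \in og_terminal G -> is_endpoint G i ti ->
  tj \in og_terminal G -> is_endpoint G j tj ->
  other G i ti \in og_internal G -> other G j tj \in og_internal G ->
  genpf (glue G i j ti tj) (glue_weights A i j) (s1 ++ s2) =
  berezin ts i (berezin ts j
    (gmul ts (genpf G A ts) (gadd (gone R E) (gmul ts (gen R i) (gen R j))))).
Proof.
move=> wf uts hset hts tiT Hi tjT Hj oi oj.
have [ij _ _] := pos_facts uts hts.
have iT : i \in tedges G by rewrite -hset inE hts mem_cat !in_cons eqxx !orbT.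
have jT : j \in tedges G by rewrite -hset inE hts mem_cat !in_cons eqxx !orbT.
have iE : i \in og_edges G by move: iT; rewrite inE => /andP[].
have jE : j \in og_edges G by move: jT; rewrite inE => /andP[].
have hT' := tedges_glue wf tiT Hi tjT Hj iE jE oi oj.
have : uniq (s1 ++ i :: j :: s2) by rewrite -hts.
rewrite cat_uniq /= => /and5P[u1 H1 H2 H3 u2].
move: H1 H2; rewrite in_cons !negb_or => /and3P[is1 js1 h12] /andP[_ is2].
have uts' : uniq (s1 ++ s2) by rewrite cat_uniq u1 h12 u2.
have hset' : [set t in s1 ++ s2] = tedges (glue G i j ti tj).
  rewrite hT' -hset hts; apply/setP => x; rewrite !inE !mem_cat !in_cons.
  case: (x =P i) => [->|_]; first by rewrite (negbTE is1) (negbTE is2) andbF.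
  case: (x =P j) => [->|_]; first by rewrite (negbTE js1) (negbTE H3).
  by [].
apply/ffunP => U.
rewrite genpfE // hT'.
case iU: (i \in U).
  rewrite ffunE iU.
  have -> // : (U \subset tedges G :\ i :\ j) = false.
  by apply/negbTE/negP => /subsetP /(_ i iU); rewrite !inE eqxx andbF.
case jU: (j \in U).
  rewrite ffunE iU ffunE in_setU1 jU orbT mulr0.
  have -> // : (U \subset tedges G :\ i :\ j) = false.
  by apply/negbTE/negP => /subsetP /(_ j jU); rewrite !inE eqxx.
rewrite (berezin_main _ uts hts) ?iU ?jU // !genpfE //.
rewrite Sdim_glue ?iU ?jU //.
have -> : (U \subset tedges G :\ i :\ j) = (U \subset tedges G).
  apply/subsetP/subsetP => H x xU; have := H x xU; rewrite !inE.
    by case/andP => _ /andP[].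
  move=> ->; rewrite !andbT; apply/andP; split; apply/eqP => e.
    by rewrite e jU in xU.
  by rewrite e iU in xU.
rewrite !subUset !sub1set iT jT /=.
by case: (U \subset tedges G); rewrite ?addr0 // addrC.
Qed.
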